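(* For every integer $n>1$ and every admissible total-degree monomial ordering on $R_n$, the set $G_n$ is the reduced Gröbner basis of the ideal $(G_n)$.
   Context: Let $R_n=\mathbb{F}_2[x_1,\ldots,x_n,y_1,\ldots,y_n,z_1,\ldots,z_n]$ with $\mathbb{F}_2=\mathbb{Z}/(2)$. For $S\subseteq R_n$, $(S)$ denotes the ideal generated by $S$. A total-degree ordering is an admissible monomial ordering that first compares total degrees. Define $S_n=\{c^2-c : c\in\{x_1,\ldots,x_n,y_1,\ldots,y_n,z_1,\ldots,z_n\}\}$, $L_n=\{x_iy_i+x_i+y_i-z_i : i=1,\ldots,n\}$, $T_n=\{x_iz_i-x_i : i=1,\ldots,n\}\cup\{y_iz_i-y_i : i=1,\ldots,n\}$, $P_n=\{\prod_{i=1}^n c_i : c_i\in\{x_i,y_i,z_i\}\text{ for each } i\}$, $G_n=S_n\cup L_n\cup T_n\cup P_n$. *)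

(* Defs.v *)
(* Multivariate polynomials over F_2 are built as an iterated
   univariate polynomial ring: mp 0 = 'F_2, mp (k+1) = {poly (mp k)}.
   Variable number k of mp k is the outermost indeterminate. *)
From HB Require Import structures.
From mathcomp Require Import all_boot all_order all_algebra.
Set Implicit Arguments. Unset Strict Implicit. Unset Printing Implicit Defensive.
Import GRing.Theory.
Local Open Scope ring_scope.

Fixpoint mp (k : nat) : comNzRingType :=
  match k with
  | 0 => 'F_2
  | k'.+1 => {poly (mp k')}
  end.

(* The indeterminate v_i of mp k (i < k); v_i = 0 if i >= k (never used). *)
Fixpoint var (k : nat) : nat -> mp k :=
  match k return nat -> mp k with
  | 0 => fun _ => 0
  | k'.+1 => fun i => if i == k' then ('X : {poly (mp k')})
                      else ((var k' i)%:P : {poly (mp k')})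
  end.

Definition mon (k : nat) := {ffun 'I_k -> nat}.

Definition mon0 (k : nat) : mon k := [ffun _ => 0%N].
Definition monM (k : nat) (a b : mon k) : mon k := [ffun i => (a i + b i)%N].
Definition mdeg (k : nat) (a : mon k) : nat := (\sum_(i < k) a i)%N.
Definition mdvd (k : nat) (a b : mon k) : Prop := forall i, (a i <= b i)%N.

(* coefm p a = coefficient of the monomial prod_i v_i^(a i) in p. *)
Fixpoint coefm (k : nat) : mp k -> mon k -> 'F_2 :=
  match k return mp k -> mon k -> 'F_2 with
  | 0 => fun c _ => c
  | k'.+1 => fun p a =>
      coefm (nth 0 (polyseq (p : {poly (mp k')})) (a ord_max))
            [ffun i : 'I_k' => a (widen_ord (leqnSn k') i)]
  end.

Definition admissible (k : nat) (le : mon k -> mon k -> Prop) : Prop :=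
  (forall a, le a a) /\
  (forall a b, le a b -> le b a -> a = b) /\
  (forall a b c, le a b -> le b c -> le a c) /\
  (forall a b, le a b \/ le b a) /\
  (forall a b c, le a b -> le (monM a c) (monM b c)) /\
  (forall a, le (mon0 k) a).

Definition total_degree (k : nat) (le : mon k -> mon k -> Prop) : Prop :=
  forall a b, (mdeg a < mdeg b)%N -> le a b /\ a <> b.

Definition is_lm (k : nat) (le : mon k -> mon k -> Prop) (p : mp k) (a : mon k) : Prop :=
  coefm p a != 0 /\ forall b, coefm p b != 0 -> le b a.

Definition ideal_gen (k : nat) (S : mp k -> Prop) (f : mp k) : Prop :=
  exists l : seq (mp k * mp k),
    (forall q, q \in l -> S q.2) /\ f = \sum_(q <- l) q.1 * q.2.

Definition groebner_basis (k : nat) (le : mon k -> mon k -> Prop)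
    (I G : mp k -> Prop) : Prop :=
  (forall g, G g -> I g) /\
  (forall f, I f -> f != 0 ->
     exists g a b, [/\ G g, is_lm le f a, is_lm le g b & mdvd b a]).

Definition reduced_groebner_basis (k : nat) (le : mon k -> mon k -> Prop)
    (I G : mp k -> Prop) : Prop :=
  [/\ groebner_basis le I G,
      (forall g, G g -> g != 0 /\ forall a, is_lm le g a -> coefm g a = 1)
    & (forall g g', G g -> G g' -> g <> g' ->
         forall b c, is_lm le g' b -> coefm g c != 0 -> ~ mdvd b c)].

Definition Rn (n : nat) := mp (3 * n).
Definition xv (n : nat) (i : 'I_n) : Rn n := var (3 * n) i.
Definition yv (n : nat) (i : 'I_n) : Rn n := var (3 * n) (n + i).
Definition zv (n : nat) (i : 'I_n) : Rn n := var (3 * n) (2 * n + i).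

Definition is_var (n : nat) (c : Rn n) : Prop :=
  exists i : 'I_n, c = xv i \/ c = yv i \/ c = zv i.

Definition Sn (n : nat) (f : Rn n) : Prop := exists c, is_var c /\ f = c ^+ 2 - c.
Definition Ln (n : nat) (f : Rn n) : Prop :=
  exists i : 'I_n, f = xv i * yv i + xv i + yv i - zv i.
Definition Tn (n : nat) (f : Rn n) : Prop :=
  exists i : 'I_n, f = xv i * zv i - xv i \/ f = yv i * zv i - yv i.
Definition Pn (n : nat) (f : Rn n) : Prop :=
  exists c : 'I_n -> Rn n,
    (forall i, c i = xv i \/ c i = yv i \/ c i = zv i) /\ f = \prod_(i < n) c i.
Definition Gn (n : nat) (f : Rn n) : Prop := [\/ Sn f, Ln f, Tn f | Pn f].

(* Main.v *)
From Stdlib Require Import Classical.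
Require Import Defs.
From HB Require Import structures.
From mathcomp Require Import all_boot all_order all_algebra.
From mathcomp Require Import zify.
Set Implicit Arguments. Unset Strict Implicit. Unset Printing Implicit Defensive.
Import GRing.Theory.
Local Open Scope ring_scope.

Lemma F2_2 (x : 'F_2) : x + x = 0.
Proof. by case: x => [[|[|m]] Hm]; apply/val_inj. Qed.
Lemma F2_ne0 (x : 'F_2) : x != 0 -> x = 1.
Proof. by case: x => [[|[|m]] Hm] //= _; apply/val_inj. Qed.

Lemma char2 k (x : mp k) : x + x = 0.
Proof.
elim: k x => [|k IH] x /=; first exact: F2_2.
by apply/polyP => i; rewrite coefD coef0 IH.
Qed.

Lemma subr_char2 k (x y : mp k) : x - y = x + y.
Proof. by apply/eqP; rewrite subr_eq -addrA char2 addr0. Qed.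

Definition restr k (a : mon k.+1) : mon k := [ffun i => a (widen_ord (leqnSn k) i)].

Lemma coefmS k (p : mp k.+1) a : coefm p a = coefm ((p : {poly mp k})`_(a ord_max)) (restr a).
Proof. by []. Qed.

Lemma coefm0 k a : coefm (0 : mp k) a = 0.
Proof. by elim: k a => [|k IH] a //=; rewrite polyseq0 nth_nil IH. Qed.

Lemma coefmD k (p q : mp k) a : coefm (p + q) a = coefm p a + coefm q a.
Proof.
elim: k p q a => [|k IH] p q a //=.
by rewrite -!/(nth _ _ _) /= (coefD p q) IH.
Qed.

Lemma coefm_sum k (I : Type) (s : seq I) (P : pred I) (F : I -> mp k) a :
  coefm (\sum_(i <- s | P i) F i) a = \sum_(i <- s | P i) coefm (F i) a.
Proof. exact: (big_morph (fun p => coefm p a) (fun p q => coefmD p q a) (coefm0 a)). Qed.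

Definition ext k (a : mon k) (j : nat) : mon k.+1 :=
  [ffun i : 'I_k.+1 => if insub (val i) is Some i' then a i' else j].

Lemma ext_max k (a : mon k) j : ext a j ord_max = j.
Proof. by rewrite ffunE insubN //= ltnn. Qed.

Lemma restr_ext k (a : mon k) j : restr (ext a j) = a.
Proof.
apply/ffunP => i; rewrite !ffunE /= insubT //= => Hi.
by congr (a _); apply/val_inj.
Qed.

Lemma coefm_ext k (p q : mp k) : (forall a, coefm p a = coefm q a) -> p = q.
Proof.
elim: k p q => [|k IH] p q H; first exact: (H (mon0 0)).
apply/polyP => j; apply: IH => a.
by have := H (ext a j); rewrite !coefmS ext_max restr_ext.
Qed.

Fixpoint Mo k : mon k -> mp k :=
  match k return mon k -> mp k with
  | 0 => fun _ => 1
  | k'.+1 => fun a => (((Mo (restr a))%:P * 'X^(a ord_max)) : {poly mp k'})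
  end.

Lemma ord_split k (P : 'I_k.+1 -> Prop) :
  P ord_max -> (forall i : 'I_k, P (widen_ord (leqnSn k) i)) -> forall i, P i.
Proof.
move=> H1 H2 i; have [lt|] := ltnP i k.
  by have -> : i = widen_ord (leqnSn k) (Ordinal lt) by apply/val_inj.
move=> le; have -> // : i = ord_max.
by apply/val_inj => /=; apply/eqP; rewrite eqn_leq le -ltnS ltn_ord.
Qed.

Lemma mon_eqS k (a b : mon k.+1) : (a == b) = (restr a == restr b) && (a ord_max == b ord_max).
Proof.
apply/eqP/andP => [->|[/eqP H1 /eqP H2]]; first by [].
apply/ffunP; apply: ord_split => // i.
by move/ffunP: H1 => /(_ i); rewrite !ffunE.
Qed.

Lemma coefmMo k (a b : mon k) : coefm (Mo a) b = (a == b)%:R.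
Proof.
elim: k a b => [|k IH] a b /=.
  by rewrite (_ : a == b); [| apply/eqP/ffunP => -[]].
rewrite -/(nth _ _ _) -/((_ : {poly _})`_ _) mul_polyC coefZ coefXn.
rewrite mon_eqS eq_sym; case: eqP => _ /=; last by rewrite mulr0 coefm0 andbF.
by rewrite mulr1 IH andbT eq_sym.
Qed.

Definition ee k (j : nat) : mon k := [ffun i => (val i == j : nat)].

Lemma restr_monM k (a b : mon k.+1) : restr (monM a b) = monM (restr a) (restr b).
Proof. by apply/ffunP => i; rewrite !ffunE. Qed.

Lemma MoM k (a b : mon k) : Mo (monM a b) = Mo a * Mo b.
Proof.
elim: k a b => [|k IH] a b /=; first by rewrite mulr1.
rewrite restr_monM IH polyCM ffunE exprD.
by rewrite mulrACA.
Qed.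

Lemma Mo0 k : Mo (mon0 k) = 1.
Proof.
elim: k => [|k IH] //=.
have -> : restr (mon0 k.+1) = mon0 k by apply/ffunP => i; rewrite !ffunE.
by rewrite IH ffunE expr0 mulr1.
Qed.

Lemma Moee k j : (j < k)%N -> Mo (ee k j) = var k j.
Proof.
elim: k => [|k IH] // Hj /=.
rewrite ffunE /=.
case: (eqVneq j k) => [->|ne].
  have -> : restr (ee k.+1 k) = mon0 k.
    by apply/ffunP => i; rewrite !ffunE /= (ltn_eqF (ltn_ord i)).
  by rewrite Mo0 expr1 mul1r.
have -> : restr (ee k.+1 j) = ee k j by apply/ffunP => i; rewrite !ffunE.
rewrite expr0 mulr1 IH //.
by rewrite ltn_neqAle ne -ltnS.
Qed.

Fixpoint ev (pt : nat -> 'F_2) k : mp k -> 'F_2 :=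
  match k return mp k -> 'F_2 with
  | 0 => fun c => c
  | k'.+1 => fun p => (map_poly (@ev pt k') (p : {poly mp k'})).[pt k']
  end.

Lemma ev_morph pt k :
  [/\ forall p q : mp k, ev pt (p - q) = ev pt p - ev pt q,
      forall p q : mp k, ev pt (p * q) = ev pt p * ev pt q & ev pt (1 : mp k) = 1].
Proof.
elim: k => [|k [fB fM f1]] //=.
have fA : zmod_morphism (ev pt (k:=k)) by [].
have fMM : monoid_morphism (ev pt (k:=k)) by [].
pose f : {rmorphism mp k -> 'F_2} :=
  HB.pack (ev pt (k:=k)) (GRing.isZmodMorphism.Build _ _ _ fA)
     (GRing.isMonoidMorphism.Build _ _ _ fMM).
have -> : ev pt (k:=k) = f by [].
split => [p q|p q|].
- by rewrite rmorphB hornerD hornerN.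
- by rewrite rmorphM hornerM.
- by rewrite rmorph1 hornerC.
Qed.

Definition evR pt k : {rmorphism mp k -> 'F_2} :=
  HB.pack (@ev pt k)
    (GRing.isZmodMorphism.Build _ _ _ (let: And3 h _ _ := ev_morph pt k in h))
    (GRing.isMonoidMorphism.Build _ _ _
       (let: And3 _ h1 h2 := ev_morph pt k in conj h2 h1)).

Lemma evRE pt k (p : mp k) : evR pt k p = ev pt p.
Proof. by []. Qed.

Lemma evS pt k (p : mp k.+1) : ev pt p = (map_poly (evR pt k) (p : {poly mp k})).[pt k].
Proof. by []. Qed.

Lemma ev_var pt k j : (j < k)%N -> ev pt (var k j) = pt j.
Proof.
elim: k => [|k IH] // Hj; rewrite [var _ _]/= evS.
case: (eqVneq j k) => [->|ne]; first by rewrite map_polyX hornerX.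
rewrite map_polyC hornerC; apply: IH.
by rewrite ltn_neqAle ne -ltnS.
Qed.

Lemma evMul pt k (p q : mp k) : ev pt (p * q) = ev pt p * ev pt q.
Proof. by case: (ev_morph pt k). Qed.
Lemma ev1 pt k : ev pt (1 : mp k) = 1.
Proof. by case: (ev_morph pt k). Qed.
Lemma evB pt k (p q : mp k) : ev pt (p - q) = ev pt p - ev pt q.
Proof. by case: (ev_morph pt k). Qed.
Lemma evAdd pt k (p q : mp k) : ev pt (p + q) = ev pt p + ev pt q.
Proof. by rewrite -subr_char2 evB; exact: (@subr_char2 0). Qed.
Lemma ev0 pt k : ev pt (0 : mp k) = 0.
Proof. by rewrite -(subrr (0 : mp k)) evB subrr. Qed.
Lemma evXn pt k (p : mp k) e : ev pt (p ^+ e) = ev pt p ^+ e.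
Proof. exact: (rmorphXn (evR pt k)). Qed.
Lemma ev_sum pt k (I : Type) (s : seq I) (P : pred I) (F : I -> mp k) :
  ev pt (\sum_(i <- s | P i) F i) = \sum_(i <- s | P i) ev pt (F i).
Proof. exact: (big_morph (@ev pt k) (@evAdd pt k) (ev0 pt k)). Qed.
Lemma ev_prod pt k (I : Type) (s : seq I) (P : pred I) (F : I -> mp k) :
  ev pt (\prod_(i <- s | P i) F i) = \prod_(i <- s | P i) ev pt (F i).
Proof. exact: (big_morph (@ev pt k) (@evMul pt k) (ev1 pt k)). Qed.
Lemma evC pt k (c : mp k) : ev pt ((c%:P : {poly mp k}) : mp k.+1) = ev pt c.
Proof. by rewrite evS map_polyC hornerC. Qed.
Lemma evX pt k : ev pt (('X : {poly mp k}) : mp k.+1) = pt k.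
Proof. by rewrite evS map_polyX hornerX. Qed.

Lemma ev_Mo pt k (a : mon k) : ev pt (Mo a) = \prod_(i < k) pt i ^+ a i.
Proof.
elim: k a => [|k IH] a; first by rewrite big_ord0.
rewrite [Mo _]/= evMul evXn evC evX IH.
rewrite big_ord_recr /=; congr (_ * _); apply: eq_bigr => i _.
by rewrite ffunE.
Qed.

Lemma supp_bound k (p : mp k) : exists B, forall a, coefm p a != 0 -> forall i, (a i < B)%N.
Proof.
elim: k p => [|k IH] p; first by exists 0%N => a _ [].
have H : forall N, exists B, forall j, (j < N)%N -> forall a,
    coefm ((p : {poly mp k})`_j) a != 0 -> forall i, (a i < B)%N.
  elim=> [|N [B HB]]; first by exists 0%N.
  have [B' HB'] := IH ((p : {poly mp k})`_N).
  exists (maxn B B') => j; rewrite ltnS leq_eqVlt => /orP[/eqP ->|lt] a Ha i.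
    by rewrite leq_max (HB' a Ha i) orbT.
  by rewrite leq_max (HB j lt a Ha i).
have [B HB] := H (size (p : {poly mp k})).
exists (maxn B (size (p : {poly mp k}))) => a; rewrite coefmS => Ha.
have Hs : (a ord_max < size (p : {poly mp k}))%N.
  rewrite ltnNge; apply/negP => Hle; move: Ha.
  by rewrite nth_default // coefm0 eqxx.
apply: ord_split; first by rewrite leq_max Hs orbT.
move=> i; have := HB _ Hs _ Ha i; rewrite ffunE => lt.
by rewrite leq_max lt.
Qed.

Lemma sum_eq_uniq (R : nzRingType) (T : eqType) (s : seq T) b :
  uniq s -> \sum_(a <- s) ((a == b)%:R : R) = (b \in s)%:R.
Proof.
elim: s => [|x s IH] /=; first by rewrite big_nil.
case/andP => nx us; rewrite big_cons IH // in_cons eq_sym.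
case: (eqVneq b x) => [eb|ne] /=.
  by rewrite -eb in nx; rewrite (negbTE nx) addr0.
by rewrite add0r.
Qed.

Lemma supp_exists k (p : mp k) : exists s : seq (mon k),
  uniq s /\ (forall a, (a \in s) = (coefm p a != 0)).
Proof.
have [B HB] := supp_bound p.
pose g (f : {ffun 'I_k -> 'I_B.+1}) : mon k := [ffun i => val (f i)].
have ginj : injective g.
  move=> f1 f2 /ffunP H; apply/ffunP => i; apply/val_inj.
  by have := H i; rewrite !ffunE.
exists [seq a <- map g (enum {ffun 'I_k -> 'I_B.+1}) | coefm p a != 0]; split.
  by rewrite filter_uniq // map_inj_uniq // enum_uniq.
move=> a; rewrite mem_filter; case: (boolP (coefm p a != 0)) => //= Ha.
apply/mapP; exists [ffun i => insubd ord0 (a i)]; first by rewrite mem_enum.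
apply/ffunP => i; rewrite !ffunE /= val_insubd.
by rewrite (leq_trans (HB a Ha i)).
Qed.

Lemma expand k (p : mp k) : exists s : seq (mon k),
  [/\ uniq s, (forall a, (a \in s) = (coefm p a != 0)) & p = \sum_(a <- s) Mo a].
Proof.
have [s [us Hs]] := supp_exists p; exists s; split => //.
apply: coefm_ext => b; rewrite coefm_sum.
under eq_bigr do rewrite coefmMo.
rewrite sum_eq_uniq // Hs.
case: (boolP (coefm p b != 0)) => [/F2_ne0 -> //|].
by rewrite negbK => /eqP.
Qed.

Lemma seq_max (T : eqType) (le : T -> T -> Prop) (s : seq T) :
  (forall a, le a a) -> (forall a b c, le a b -> le b c -> le a c) ->
  (forall a b, le a b \/ le b a) ->
  s != [::] -> exists2 a, a \in s & forall b, b \in s -> le b a.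
Proof.
move=> refl trans tot; elim: s => [|x s IH] // _.
case: (eqVneq s [::]) => [->|ne].
  by exists x => [|b]; rewrite ?mem_head // inE => /eqP ->.
have [m ms Hm] := IH ne.
have [lxm|lmx] := tot x m.
  exists m; first by rewrite inE ms orbT.
  by move=> b; rewrite inE => /orP[/eqP ->|/Hm].
exists x; first by rewrite mem_head.
by move=> b; rewrite inE => /orP[/eqP ->|/Hm H]; [|apply: trans lmx].
Qed.

Section Ideal.
Variables (k : nat) (S : mp k -> Prop).
Lemma ideal_gen_in g : S g -> ideal_gen S g.
Proof.
move=> Sg; exists [:: (1, g)]; split; first by move=> q; rewrite inE => /eqP ->.
by rewrite big_seq1 mul1r.
Qed.
Lemma ideal_gen0 : ideal_gen S 0.
Proof. by exists [::]; rewrite big_nil. Qed.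
Lemma ideal_genD f1 f2 : ideal_gen S f1 -> ideal_gen S f2 -> ideal_gen S (f1 + f2).
Proof.
move=> [l1 [H1 ->]] [l2 [H2 ->]]; exists (l1 ++ l2); split; last by rewrite big_cat.
by move=> q; rewrite mem_cat => /orP[/H1|/H2].
Qed.
Lemma ideal_genM q f : ideal_gen S f -> ideal_gen S (q * f).
Proof.
move=> [l [H ->]]; exists [seq (q * x.1, x.2) | x <- l]; split.
  move=> x /mapP [y yl ->] /=; exact: H yl.
by rewrite big_map big_distrr; apply: eq_bigr => x _ /=; rewrite mulrA.
Qed.
Lemma ideal_genB f1 f2 : ideal_gen S f1 -> ideal_gen S f2 -> ideal_gen S (f1 - f2).
Proof. by rewrite subr_char2; apply: ideal_genD. Qed.
Lemma ideal_gen_sum (I : eqType) (s : seq I) (F : I -> mp k) :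
  (forall i, i \in s -> ideal_gen S (F i)) -> ideal_gen S (\sum_(i <- s) F i).
Proof.
elim: s => [|x s IH] H; first by rewrite big_nil; apply: ideal_gen0.
rewrite big_cons; apply: ideal_genD; first by apply: H; rewrite mem_head.
by apply: IH => i ins; apply: H; rewrite inE ins orbT.
Qed.
Lemma ideal_gen_ev pt f : (forall g, S g -> ev pt g = 0) -> ideal_gen S f -> ev pt f = 0.
Proof.
move=> H [l [Hl ->]]; rewrite ev_sum big1_seq // => q /andP [_ ql].
by rewrite evMul (H _ (Hl _ ql)) mulr0.
Qed.
End Ideal.

Definition get k (a : mon k) (j : nat) : nat :=
  if insub j is Some t then a t else 0%N.

Lemma getE k (a : mon k) (t : 'I_k) : get a t = a t.
Proof. by rewrite /get valK. Qed.
Lemma get_out k (a : mon k) j : (k <= j)%N -> get a j = 0%N.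
Proof. by move=> H; rewrite /get insubF // ltnNge H. Qed.
Lemma get_ee k j t : (t < k)%N -> get (ee k j) t = (t == j).
Proof. by move=> H; rewrite /get insubT ffunE. Qed.
Lemma get_monM k (a b : mon k) t : get (monM a b) t = (get a t + get b t)%N.
Proof. by rewrite /get; case: insubP => // u _ _; rewrite ffunE. Qed.
Lemma get_mon0 k t : get (mon0 k) t = 0%N.
Proof. by rewrite /get; case: insubP => // u _ _; rewrite ffunE. Qed.
Lemma get_bigM k (I : Type) (s : seq I) (F : I -> mon k) t :
  get (\big[@monM k/mon0 k]_(i <- s) F i) t = (\sum_(i <- s) get (F i) t)%N.
Proof.
elim: s => [|x s IH]; first by rewrite !big_nil get_mon0.
by rewrite !big_cons get_monM IH.
Qed.
Lemma mon_ext k (a b : mon k) : (forall t, (t < k)%N -> get a t = get b t) -> a = b.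
Proof. by move=> H; apply/ffunP => t; rewrite -!getE H. Qed.
Lemma mdvd_get k (a b : mon k) : mdvd a b -> forall t, (get a t <= get b t)%N.
Proof. by move=> H t; rewrite /get; case: insubP. Qed.
Lemma get_mdvd k (a b : mon k) : (forall t, (t < k)%N -> (get a t <= get b t)%N) -> mdvd a b.
Proof. by move=> H t; rewrite -!getE H. Qed.
Lemma mdeg_get k (a : mon k) : mdeg a = (\sum_(t < k) get a t)%N.
Proof. by apply: eq_bigr => t _; rewrite getE. Qed.
Lemma mdeg_monM k (a b : mon k) : mdeg (monM a b) = (mdeg a + mdeg b)%N.
Proof. by rewrite /mdeg -big_split; apply: eq_bigr => i _; rewrite ffunE. Qed.
Lemma mdeg_mon0 k : mdeg (mon0 k) = 0%N.
Proof. by rewrite /mdeg big1 // => i _; rewrite ffunE. Qed.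
Lemma mdeg_ee k j : (j < k)%N -> mdeg (ee k j) = 1%N.
Proof.
move=> H; rewrite /mdeg (bigD1 (Ordinal H)) //= ffunE eqxx big1 // => i ne.
by rewrite ffunE; case: eqP => // E; case/eqP: ne; apply/val_inj.
Qed.
Lemma mdeg_bigM k (I : Type) (s : seq I) (F : I -> mon k) :
  mdeg (\big[@monM k/mon0 k]_(i <- s) F i) = (\sum_(i <- s) mdeg (F i))%N.
Proof.
elim: s => [|x s IH]; first by rewrite !big_nil mdeg_mon0.
by rewrite !big_cons mdeg_monM IH.
Qed.
Lemma mdvd_mdeg k (a b : mon k) : mdvd a b -> (mdeg a <= mdeg b)%N.
Proof. by move=> H; apply: leq_sum => i _; apply: H. Qed.
Lemma mdvd_eq k (a b : mon k) : mdvd a b -> mdeg a = mdeg b -> a = b.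
Proof.
move=> H E; apply/ffunP => i; apply/eqP; rewrite eqn_leq H /=.
apply/negP => /negP; rewrite -ltnNge => lt.
have : (mdeg a < mdeg b)%N.
  rewrite /mdeg (bigD1 i) //= [X in (_ < X)%N](bigD1 i) //=.
  by rewrite -addSn leq_add // leq_sum // => j _; apply: H.
by rewrite E ltnn.
Qed.
Lemma mdvd_split k (a b : mon k) : mdvd a b -> exists q, b = monM q a.
Proof.
move=> H; exists [ffun i => (b i - a i)%N]; apply/ffunP => i.
by rewrite !ffunE subnK.
Qed.

Section N.
Variable n : nat.
Local Notation k := (3 * n)%N.

Inductive gd := GS of nat | GL of nat | GTx of nat | GTy of nat | GP of ('I_n -> nat).

Definition vr j : mp k := var k j.
Definition E j : mon k := ee k j.

Definition valid d : Prop := match d with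
 | GS j => (j < k)%N
 | GL i | GTx i | GTy i => (i < n)%N
 | GP f => forall l : 'I_n, f l = l \/ f l = (n + l)%N \/ f l = (2*n + l)%N end.

Definition gpoly d : mp k := match d with
 | GS j => vr j ^+ 2 - vr j
 | GL i => vr i * vr (n+i) + vr i + vr (n+i) - vr (2*n+i)
 | GTx i => vr i * vr (2*n+i) - vr i
 | GTy i => vr (n+i) * vr (2*n+i) - vr (n+i)
 | GP f => \prod_(l < n) vr (f l) end.

Definition glead d : mon k := match d with
 | GS j => monM (E j) (E j)
 | GL i => monM (E i) (E (n+i))
 | GTx i => monM (E i) (E (2*n+i))
 | GTy i => monM (E (n+i)) (E (2*n+i))
 | GP f => \big[@monM k/mon0 k]_(l < n) E (f l) end.

Definition grest d : seq (mon k) := match d with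
 | GS j => [:: E j] | GL i => [:: E i; E (n+i); E (2*n+i)]
 | GTx i => [:: E i] | GTy i => [:: E (n+i)] | GP _ => [::] end.

Definition gmons d := glead d :: grest d.

Lemma MoE j : (j < k)%N -> Mo (E j) = vr j.
Proof. exact: Moee. Qed.

Lemma valid_lt f : valid (GP f) -> forall l, (f l < k)%N.
Proof. by move=> H l; have := ltn_ord l; case: (H l) => [->|[->|->]]; lia. Qed.

Lemma gpoly_sum d : valid d -> gpoly d = \sum_(a <- gmons d) Mo a.
Proof.
case: d => [j|i|i|i|f] /= H; rewrite !big_cons ?big_nil ?addr0 ?MoM ?MoE; try lia.
- by rewrite subr_char2 expr2.
- by rewrite subr_char2 !addrA.
- by rewrite subr_char2.
- by rewrite subr_char2.
rewrite (big_morph (@Mo k) (@MoM k) (Mo0 k)); apply: eq_bigr => l _.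
by rewrite MoE // valid_lt.
Qed.

Lemma E_inj j j' : (j < k)%N -> (j' < k)%N -> E j = E j' -> j = j'.
Proof.
move=> H H' /(congr1 (fun a => get a j)); rewrite !get_ee // eqxx.
by case: eqP.
Qed.

Lemma Gn_gd (g : Rn n) : Gn g -> exists d, valid d /\ g = gpoly d.
Proof.
case=> [[c [[i Hc] ->]]|[i ->]|[i [->|->]]|[c [Hc ->]]].
- have := ltn_ord i.
  by case: Hc => [->|[->|->]] Hi; [exists (GS i)|exists (GS (n+i))|exists (GS (2*n+i))];
     split => //=; lia.
- by exists (GL i); split => //=.
- by exists (GTx i); split => //=.
- by exists (GTy i); split => //=.
pose f (l : 'I_n) : nat := if c l == xv l then (l : nat) else if c l == yv l then (n + l)%N
                           else (2 * n + l)%N.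
exists (GP f); split.
  move=> l; rewrite /f; case: eqP => _; first by left.
  by case: eqP => _; [right; left|right; right].
apply: eq_bigr => l _; rewrite /f.
case: eqP => [->//|ne1]; case: eqP => [->//|ne2].
by case: (Hc l) => [|[|]].
Qed.

Lemma gd_Gn d : valid d -> Gn (gpoly d : Rn n).
Proof.
case: d => [j|i|i|i|f] /= H.
- apply: Or41; exists (vr j); split => //.
  rewrite /xv /yv /zv /vr.
  have [lt1|ge1] := ltnP j n; first by exists (Ordinal lt1); left.
  have [lt2|ge2] := ltnP j (2 * n).
    have Hi : (j - n < n)%N by lia.
    exists (Ordinal Hi); right; left => /=; congr var; rewrite /=; lia.
  have Hi : (j - 2 * n < n)%N by lia.
  by exists (Ordinal Hi); right; right; congr var; rewrite /=; lia.
- by apply: Or42; exists (Ordinal H).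
- by apply: Or43; exists (Ordinal H); left.
- by apply: Or43; exists (Ordinal H); right.
apply: Or44; exists (fun l => vr (f l)); split => // l.
by rewrite /xv /yv /zv /vr; case: (H l) => [->|[->|->]]; auto.
Qed.
End N.

Section N.
Variable n : nat.
Local Notation k := (3 * n)%N.

Lemma valid_inj (f : 'I_n -> nat) : valid (GP f) -> forall l l', f l = f l' -> l = l'.
Proof.
move=> H l l' E; apply/val_inj; have := ltn_ord l; have := ltn_ord l'.
by case: (H l) E => [->|[->|->]]; case: (H l') => [->|[->|->]] /=; lia.
Qed.

Lemma getGP_f (f : 'I_n -> nat) l : valid (GP f) -> get (glead (GP f)) (f l) = 1%N.
Proof.
move=> H; rewrite /= get_bigM (bigD1 l) //= get_ee ?valid_lt // eqxx big1 // => l' ne.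
rewrite get_ee ?valid_lt //; case: eqP => // /valid_inj E.
by rewrite (E H) eqxx in ne.
Qed.

Lemma getGP_0 (f : 'I_n -> nat) t : (t < k)%N -> (forall l, t != f l) ->
  get (glead (GP f)) t = 0%N.
Proof.
move=> Ht H; rewrite /= get_bigM big1 // => l _.
by rewrite get_ee // (negbTE (H l)).
Qed.

Lemma getGP_le1 (f : 'I_n -> nat) t : valid (GP f) -> (get (glead (GP f)) t <= 1)%N.
Proof.
move=> H; have [Ht|Ht] := ltnP t k; last by rewrite get_out.
case: (boolP [exists l, t == f l]) => [/existsP [l /eqP ->]|].
  by rewrite getGP_f.
by rewrite negb_exists => /forallP Hl; rewrite getGP_0.
Qed.

Lemma getGP_pos (f : 'I_n -> nat) t : (0 < get (glead (GP f)) t)%N ->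
  exists l, t = f l.
Proof.
have [Ht|Ht] := ltnP t k; last by rewrite get_out.
case: (boolP [exists l, t == f l]) => [/existsP [l /eqP ->]|]; first by exists l.
by rewrite negb_exists => /forallP Hl; rewrite getGP_0.
Qed.

Lemma mdeg_lead (d : gd n) : valid d ->
  mdeg (glead d) = (match d with GP _ => n | _ => 2 end)%N.
Proof.
case: d => [j|i|i|i|f] /= H; rewrite ?mdeg_monM ?mdeg_ee //; try lia.
rewrite mdeg_bigM (eq_bigr (fun _ => 1%N)) => [|l _]; last by rewrite mdeg_ee // valid_lt.
by rewrite sum1_card card_ord.
Qed.

Lemma mdeg_rest (d : gd n) a : valid d -> a \in grest d -> mdeg a = 1%N.
Proof.
case: d => [j|i|i|i|f] /= H; rewrite ?inE //.
- by move/eqP ->; rewrite mdeg_ee.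
- by case/or3P => /eqP ->; rewrite mdeg_ee //; lia.
- by move/eqP ->; rewrite mdeg_ee //; lia.
- by move/eqP ->; rewrite mdeg_ee //; lia.
Qed.

Lemma lead_notin_rest (d : gd n) : valid d -> (1 < n)%N -> glead d \notin grest d.
Proof.
move=> H hn; apply/negP => /(mdeg_rest H); rewrite mdeg_lead //.
by case: d H => //=; lia.
Qed.

Lemma uniq_mons (d : gd n) : valid d -> (1 < n)%N -> uniq (gmons d).
Proof.
move=> H hn; rewrite /gmons cons_uniq lead_notin_rest //=.
case: d H => //= i H; rewrite !inE /= andbT; apply/andP; split.
  by apply/negP => /orP [] /eqP /E_inj; lia.
by apply/negP => /eqP /E_inj; lia.
Qed.

Lemma coefm_gpoly (d : gd n) c : valid d -> (1 < n)%N ->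
  coefm (gpoly d) c = (c \in gmons d)%:R.
Proof.
move=> H hn; rewrite gpoly_sum // coefm_sum.
under eq_bigr do rewrite coefmMo.
by rewrite sum_eq_uniq // uniq_mons.
Qed.

Lemma is_lm_gpoly (d : gd n) (le : mon k -> mon k -> Prop) : valid d -> (1 < n)%N ->
  admissible le -> total_degree le ->
  is_lm le (gpoly d) (glead d) /\ (forall b, is_lm le (gpoly d) b -> b = glead d).
Proof.
move=> H hn [refl [anti _]] td.
have Hle : forall b, coefm (gpoly d) b != 0 -> le b (glead d).
  move=> b; rewrite coefm_gpoly // inE; case: (eqVneq b (glead d)) => [-> _|ne /=]; first exact: refl.
  case: (boolP (b \in grest d)) => // Hb _.
  have := td b (glead d); rewrite (mdeg_rest H Hb) mdeg_lead //.
  have -> : (1 < match d with GP _ => n | _ => 2 end)%N by case: (d).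
  by case.
have Hl : coefm (gpoly d) (glead d) != 0 by rewrite coefm_gpoly // mem_head.
split; first by split.
move=> b [Hb Hmax]; apply: anti; [exact: Hle|exact: Hmax].
Qed.
End N.

Section N.
Variable n : nat.
Local Notation k := (3 * n)%N.

Definition ab (d : gd n) : nat * nat := match d with
 | GS j => (j, j) | GL i => (i, n + i)%N | GTx i => (i, 2 * n + i)%N
 | GTy i => (n + i, 2 * n + i)%N | GP _ => (0, 0)%N end.

Definition isGP (d : gd n) := if d is GP _ then true else false.

Lemma ab_lt (d : gd n) : valid d -> ~~ isGP d ->
  [&& ((ab d).1 < k)%N, ((ab d).2 < k)%N & ((ab d).1 <= (ab d).2)%N].
Proof. by case: d => //= *; apply/and3P; split; lia. Qed.

Lemma get_lead2 (d : gd n) t : valid d -> ~~ isGP d ->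
  get (glead d) t = ((t == (ab d).1) + (t == (ab d).2))%N.
Proof.
move=> H nG; have /and3P [H1 H2 _] := ab_lt H nG.
have -> : glead d = monM (E n (ab d).1) (E n (ab d).2) by case: d H nG {H1 H2}.
rewrite get_monM; have [Ht|Ht] := ltnP t k; first by rewrite !get_ee.
rewrite !get_out //; lia.
Qed.

Lemma ab_inj (d d' : gd n) : valid d -> valid d' -> ~~ isGP d -> ~~ isGP d' ->
  ab d = ab d' -> d = d'.
Proof.
by case: d => [j|i|i|i|f]; case: d' => [j'|i'|i'|i'|f'] //= H H' _ _ [E1 E2];
  try (congr (_ _); lia); exfalso; lia.
Qed.

Lemma lead_inj (d d' : gd n) : valid d -> valid d' -> (1 < n)%N ->
  glead d = glead d' -> gpoly d = gpoly d'.
Proof.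
move=> H H' hn Eq.
have G : forall t, get (glead d) t = get (glead d') t by move=> t; rewrite Eq.
have o0 : (0 < n)%N by lia.
case: (boolP (isGP d)) => gd; case: (boolP (isGP d')) => gd'.
- case: d H Eq G gd => // f H _ G _; case: d' H' G gd' => // f' H' G _ /=.
  apply: eq_bigr => l _; congr vr.
  have := G (f l); rewrite getGP_f // => /esym E1.
  have [l' El'] : exists l', f l = f' l' by apply: getGP_pos; rewrite E1.
  suff E2 : l = l' by rewrite El' E2.
  apply/val_inj; have := ltn_ord l; have := ltn_ord l'.
  by case: (H l) El' => [->|[->|->]]; case: (H' l') => [->|[->|->]] /=; lia.
- exfalso; case: d H Eq G gd => // f H _ G _.
  have := G (f (Ordinal o0)); have := G (f (Ordinal hn)).
  rewrite !getGP_f // !get_lead2 //.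
  case: (H (Ordinal o0)) => [->|[->|->]]; case: (H (Ordinal hn)) => [->|[->|->]] /=;
    case: d' H' {G gd'} => //= *; lia.
- exfalso; case: d' H' Eq G gd' => // f H' _ G _.
  have := G (f (Ordinal o0)); have := G (f (Ordinal hn)).
  rewrite !getGP_f // !get_lead2 //.
  case: (H' (Ordinal o0)) => [->|[->|->]]; case: (H' (Ordinal hn)) => [->|[->|->]] /=;
    case: d H {G gd} => //= *; lia.
- suff -> : d = d' by [].
  apply: ab_inj => //.
  have := G (ab d).1; have := G (ab d).2; have := G (ab d').1; have := G (ab d').2.
  have := ab_lt H gd; have := ab_lt H' gd'.
  rewrite !get_lead2 //; case: (ab d) => a b; case: (ab d') => a' b' /=.
  move=> /and3P [? ? ?] /and3P [? ? ?] *; congr pair; lia.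
Qed.

Lemma reduced3 (d d' : gd n) c : valid d -> valid d' -> (1 < n)%N ->
  gpoly d <> gpoly d' -> c \in gmons d -> ~ mdvd (glead d') c.
Proof.
move=> H H' hn ne Hc Hdvd.
have deg2 : forall e : gd n, valid e -> (2 <= mdeg (glead e))%N.
  by move=> e He; rewrite mdeg_lead //; case: (e).
move: Hc; rewrite inE => /orP [/eqP Ec|Hc]; last first.
  by have := mdvd_mdeg Hdvd; rewrite (mdeg_rest H Hc) => /(leq_trans (deg2 _ H')).
rewrite {}Ec in Hdvd.
have [Edeg|Ndeg] := eqVneq (mdeg (glead d')) (mdeg (glead d)).
  by apply: ne; apply/esym/lead_inj => //; apply: mdvd_eq.
have Hlt : (mdeg (glead d') < mdeg (glead d))%N by rewrite ltn_neqAle Ndeg mdvd_mdeg.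
rewrite !mdeg_lead // in Hlt; clear Ndeg.
have nGP' : ~~ isGP d' by case: d' H' Hlt {ne Hdvd} => //= f' H'; case: (d); lia.
have E2 : (match d' with GP _ => n | _ => 2 end) = 2%N by case: (d') nGP'.
rewrite E2 in Hlt.
have [f Ed] : exists f, d = GP f.
  by case: d H Hlt {ne Hdvd} => /= [*|*|*|*|f]; [lia|lia|lia|lia|exists f].
rewrite {d ne Hlt}Ed in H Hdvd.
have G := mdvd_get Hdvd.
have /and3P [Ha Hb Hab] := ab_lt H' nGP'.
have Ga := G (ab d').1; have Gb := G (ab d').2.
rewrite !(get_lead2 _ H' nGP') in Ga Gb.
have [E1|N1] := eqVneq (ab d').1 (ab d').2.
  move: Ga; rewrite E1 eqxx; have := getGP_le1 (ab d').2 H. lia.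
have P1 : (0 < get (glead (GP f)) (ab d').1)%N by lia.
have P2 : (0 < get (glead (GP f)) (ab d').2)%N by lia.
have [l1 El1] := getGP_pos P1.
have [l2 El2] := getGP_pos P2.
suff E : l1 = l2 by move: N1; rewrite El1 El2 E eqxx.
apply/val_inj; have := ltn_ord l1; have := ltn_ord l2.
move: El1 El2.
case: (H l1) => [->|[->|->]]; case: (H l2) => [->|[->|->]];
  case: d' H' nGP' {E2 P1 P2 Hdvd G Ga Gb Ha Hb Hab N1} => //= *; lia.
Qed.
End N.

Section N.
Variable n : nat.
Local Notation k := (3 * n)%N.

Definition bsum (a : mon k) i := (get a i + get a (n + i) + get a (2 * n + i))%N.

Definition std (a : mon k) : Prop :=
  [/\ forall t, (get a t <= 1)%N, forall i, (i < n)%N -> (bsum a i <= 1)%N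
    & exists2 i, (i < n)%N & bsum a i = 0%N].

Lemma nonstd_div (a : mon k) : ~ std a -> exists d : gd n, valid d /\ mdvd (glead d) a.
Proof.
move=> ns.
case: (classic (exists t, 1 < get a t)%N) => [[t Ht]|H1].
  have Htk : (t < k)%N by case: (ltnP t k) => // le; move: Ht; rewrite get_out.
  exists (GS n t); split => //; apply: get_mdvd => s Hs /=.
  by rewrite get_monM get_ee //; case: eqP => [->|] //=; lia.
have H1' : forall t, (get a t <= 1)%N.
  by move=> t; case: (leqP (get a t) 1) => // lt; case: H1; exists t.
case: (classic (exists2 i, (i < n)%N & (1 < bsum a i)%N)) => [[i Hi Hb]|H2].
  rewrite /bsum in Hb; have := H1' i; have := H1' (n + i)%N; have := H1' (2 * n + i)%N.
  move=> h3 h2 h1.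
  have [p1|p1] := leqP 1 (get a i); have [p2|p2] := leqP 1 (get a (n + i)).
  - exists (GL n i); split => //; apply: get_mdvd => s Hs /=.
    rewrite get_monM !get_ee //; (case: (eqVneq s i) => [->|?]; last case: (eqVneq s (n + i)%N) => [->|?]); lia.
  - exists (GTx n i); split => //; apply: get_mdvd => s Hs /=.
    rewrite get_monM !get_ee //; (case: (eqVneq s i) => [->|?]; last case: (eqVneq s (2 * n + i)%N) => [->|?]); lia.
  - exists (GTy n i); split => //; apply: get_mdvd => s Hs /=.
    rewrite get_monM !get_ee //; (case: (eqVneq s (n + i)%N) => [->|?]; last case: (eqVneq s (2 * n + i)%N) => [->|?]); lia.
  - lia.
have H2' : forall i, (i < n)%N -> (bsum a i <= 1)%N.
  by move=> i Hi; case: (leqP (bsum a i) 1) => // lt; case: H2; exists i.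
have H3 : forall i, (i < n)%N -> (0 < bsum a i)%N.
  move=> i Hi; case: (posnP (bsum a i)) => // E; case: ns; split => //.
  by exists i.
pose f (l : 'I_n) : nat := if (0 < get a l)%N then (l : nat)
   else if (0 < get a (n + l))%N then (n + l)%N else (2 * n + l)%N.
have Vf : valid (GP f).
  move=> l; rewrite /f; case: ifP => _; first by left.
  by case: ifP => _; [right; left|right; right].
exists (GP f); split => //; apply: get_mdvd => t Ht.
case: (posnP (get (glead (GP f)) t)) => [-> //|/getGP_pos [l ->]].
rewrite getGP_f //; have := H3 l (ltn_ord l); rewrite /bsum /f.
by case: ifP => //; case: ifP => //; lia.
Qed.

Local Notation I := (ideal_gen (@Gn n)).
Definition stdp (r : mp k) := forall c, coefm r c != 0 -> std c.

Lemma coefmD_ne0 (r1 r2 : mp k) c : coefm (r1 + r2) c != 0 -> coefm r1 c != 0 \/ coefm r2 c != 0.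
Proof.
rewrite coefmD; case: (eqVneq (coefm r1 c) 0) => [->|]; first by rewrite add0r; right.
by left.
Qed.

Lemma coefm_sub_ne0 (r1 r2 : mp k) c : coefm (r1 - r2) c != 0 -> coefm r1 c != 0 \/ coefm r2 c != 0.
Proof. by rewrite subr_char2; apply: coefmD_ne0. Qed.

Lemma reduce_mon (hn : (1 < n)%N) N (b : mon k) : (mdeg b < N)%N ->
  exists r, [/\ stdp r, I (Mo b - r),
     (forall c, coefm r c != 0 -> (mdeg c <= mdeg b)%N),
     (std b -> r = Mo b) &
     (~ std b -> forall c, coefm r c != 0 -> (mdeg c < mdeg b)%N)].
Proof.
elim: N b => [//|N IH] b Hb.
case: (classic (std b)) => [sb|nsb].
  exists (Mo b); split => //.
  - by move=> c; rewrite coefmMo; case: (eqVneq b c) => [<-|] //; rewrite eqxx.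
  - by rewrite subrr; apply: ideal_gen0.
  - by move=> c; rewrite coefmMo; case: (eqVneq b c) => [<-|] //; rewrite eqxx.
have [d [Hd Hdvd]] := nonstd_div nsb.
have [q Eb] := mdvd_split Hdvd.
have HL : (2 <= mdeg (glead d))%N by rewrite mdeg_lead //; case: (d).
have Hdb : mdeg b = (mdeg q + mdeg (glead d))%N by rewrite Eb mdeg_monM.
have Hs : forall s : seq (mon k), (forall a, a \in s -> mdeg a = 1%N) ->
  exists r, [/\ stdp r, I (\sum_(a <- s) Mo (monM q a) - r) &
     forall c, coefm r c != 0 -> (mdeg c < mdeg b)%N].
  elim=> [|a s IHs] Hsd.
    exists 0; split => //; first by move=> c; rewrite coefm0 eqxx.
      by rewrite big_nil subrr; apply: ideal_gen0.
    by move=> c; rewrite coefm0 eqxx.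
  have [r1 [s1 i1 d1]] : exists r, [/\ stdp r, I (\sum_(a <- s) Mo (monM q a) - r) &
     forall c, coefm r c != 0 -> (mdeg c < mdeg b)%N].
    by apply: IHs => a' ha'; apply: Hsd; rewrite inE ha' orbT.
  have Ha : (mdeg (monM q a) < N)%N.
    by rewrite mdeg_monM (Hsd a (mem_head _ _)); lia.
  have [r2 [s2 i2 d2 _ _]] := IH _ Ha.
  exists (r2 + r1); split.
  - by move=> c /coefmD_ne0 [/s2|/s1].
  - rewrite big_cons.
    have -> : Mo (monM q a) + \sum_(a0 <- s) Mo (monM q a0) - (r2 + r1) =
      (Mo (monM q a) - r2) + (\sum_(a0 <- s) Mo (monM q a0) - r1).
      by rewrite opprD !addrA; congr (_ + _); rewrite -!addrA; congr (_ + _); rewrite addrC.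
    exact: ideal_genD.
  - move=> c /coefmD_ne0 [/d2|/d1] //.
    by rewrite mdeg_monM (Hsd a (mem_head _ _)) => h; lia.
have [r [sr ir dr]] := Hs (grest d) (fun a => mdeg_rest Hd).
exists r; split => //.
- have -> : Mo b - r = Mo q * gpoly d + (\sum_(a <- grest d) Mo (monM q a) - r).
    rewrite Eb MoM gpoly_sum // big_cons mulrDr big_distrr /=.
    have -> : \sum_(a <- grest d) Mo (monM q a) = \sum_(i <- grest d) Mo q * Mo i.
      by apply: eq_bigr => a _; rewrite MoM.
    set S := \sum_(i <- grest d) _.
    by rewrite -!addrA [S + (S - r)]addrA char2 add0r.
  apply: ideal_genD => //; apply: ideal_genM; apply: ideal_gen_in.
  exact: gd_Gn.
- by move=> c /dr /ltnW.
Qed.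
End N.

Definition Xq (q : nat) : 'F_2 := ((q == 1%N) || (q == 3%N))%:R.
Definition Yq (q : nat) : 'F_2 := ((q == 2%N) || (q == 3%N))%:R.
Definition Zq (q : nat) : 'F_2 := (q != 0%N)%:R.

Definition phi (u q : 'I_4) : 'F_2 :=
  match val u with 0 => 1 | 1 => Xq q | 2 => Yq q | _ => Zq q end.
Definition psi (u q : 'I_4) : 'F_2 :=
  match val u with
  | 0 => (val q == 0%N)%:R
  | 1 => (val q == 3%N)%:R + (val q == 2%N)%:R
  | 2 => (val q == 3%N)%:R + (val q == 1%N)%:R
  | _ => 1 end.

Lemma orth (u v : 'I_4) : \sum_(q < 4) psi u q * phi v q = (u == v)%:R.
Proof.
rewrite !big_ord_recl big_ord0.
case: u => [[|[|[|[|u]]]] Hu] //; case: v => [[|[|[|[|v]]]] Hv] //;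
  by apply/val_inj.
Qed.

Section N.
Variable n : nat.
Local Notation k := (3 * n)%N.

Definition pget (p : {ffun 'I_n -> 'I_4}) (i : nat) : nat :=
  if insub i is Some i' then val (p i') else 0%N.

Definition pt_of (p : {ffun 'I_n -> 'I_4}) (t : nat) : 'F_2 :=
  if (t < n)%N then Xq (pget p t) else if (t < 2 * n)%N then Yq (pget p (t - n))
  else Zq (pget p (t - 2 * n)).

Lemma pgetE p (i : 'I_n) : pget p i = val (p i).
Proof. by rewrite /pget; case: insubP => [u _ /val_inj ->|] //; rewrite ltn_ord. Qed.

Lemma pget_lt p i : (pget p i < 4)%N.
Proof. by rewrite /pget; case: insubP => // u _ _; rewrite ltn_ord. Qed.

Lemma pt_x p i : (i < n)%N -> pt_of p i = Xq (pget p i).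
Proof. by rewrite /pt_of => ->. Qed.
Lemma pt_y p i : (i < n)%N -> pt_of p (n + i) = Yq (pget p i).
Proof. by move=> H; rewrite /pt_of ifF ?ifT; [congr Yq; congr pget|lia|lia]; lia. Qed.
Lemma pt_z p i : (i < n)%N -> pt_of p (2 * n + i) = Zq (pget p i).
Proof. by move=> H; rewrite /pt_of ifF ?ifF; [congr Zq; congr pget|lia|lia]; lia. Qed.

Lemma F2_sq (x : 'F_2) : x ^+ 2 - x = 0.
Proof. by case: x => [[|[|m]] Hm] //; apply/val_inj. Qed.

Lemma ev_gpoly_0 (d : gd n) (p : {ffun 'I_n -> 'I_4}) (i0 : 'I_n) : valid d -> val (p i0) = 0%N ->
  ev (pt_of p) (gpoly d) = 0.
Proof.
move=> H p0; case: d H => [j|i|i|i|f] /= H.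
- by rewrite evB evXn /vr ev_var ?F2_sq.
- rewrite evB !evAdd evMul /vr !ev_var; try lia.
  rewrite pt_x ?pt_y ?pt_z //; have := pget_lt p i.
  by case: (pget p i) => [|[|[|[|q]]]] //= _; apply/val_inj.
- rewrite evB evMul /vr !ev_var; try lia.
  rewrite pt_x ?pt_z //; have := pget_lt p i.
  by case: (pget p i) => [|[|[|[|q]]]] //= _; apply/val_inj.
- rewrite evB evMul /vr !ev_var; try lia.
  rewrite pt_y ?pt_z //; have := pget_lt p i.
  by case: (pget p i) => [|[|[|[|q]]]] //= _; apply/val_inj.
rewrite ev_prod (bigD1 i0) //= /vr ev_var ?valid_lt //.
have := ltn_ord i0.
case: (H i0) => [->|[->|->]] Hi; [rewrite pt_x //|rewrite pt_y //|rewrite pt_z //];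
  by rewrite pgetE p0 mul0r.
Qed.

Lemma prod_blocks (R : comNzRingType) (F : nat -> R) :
  \prod_(t < k) F t = \prod_(i < n) (F i * F (n + i)%N * F (2 * n + i)%N).
Proof.
rewrite -(big_mkord xpredT F) (big_cat_nat _ (n := n)) //=; last lia.
rewrite [\prod_(n <= i < k) _](big_cat_nat _ (n := (2 * n)%N)) //=; try lia.
have -> : \prod_(n <= i < 2 * n) F i = \prod_(0 <= i < n) F (n + i)%N.
  rewrite -{1}(add0n n) big_addn; have -> : (2 * n - n = n)%N by lia.
  by apply: eq_bigr => i _; rewrite addnC.
have -> : \prod_(2 * n <= i < k) F i = \prod_(0 <= i < n) F (2 * n + i)%N.
  rewrite -{1}(add0n (2 * n)%N) big_addn; have -> : (k - 2 * n = n)%N by lia.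
  by apply: eq_bigr => i _; rewrite addnC.
by rewrite !big_mkord -!big_split; apply: eq_bigr => i _ /=; rewrite mulrA.
Qed.

Definition tcode (c : mon k) (i : nat) : nat :=
  if (0 < get c i)%N then 1 else if (0 < get c (n + i))%N then 2
  else if (0 < get c (2 * n + i))%N then 3 else 0.

Definition tau (c : mon k) (i : nat) : 'I_4 := inord (tcode c i).

Lemma tcode_le c i : (tcode c i <= 3)%N.
Proof. by rewrite /tcode; repeat case: ifP. Qed.

Lemma val_tau c i : nat_of_ord (tau c i) = tcode c i.
Proof. by rewrite /tau inordK // ltnS tcode_le. Qed.

Lemma ev_std (p : {ffun 'I_n -> 'I_4}) c : std c ->
  ev (pt_of p) (Mo c) = \prod_(i < n) phi (tau c i) (p i).
Proof.
move=> [H1 H2 _]; rewrite ev_Mo.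
rewrite (eq_bigr (fun t : 'I_k => pt_of p t ^+ get c t)); last by move=> t _; rewrite getE.
rewrite (prod_blocks (fun t => pt_of p t ^+ get c t)).
apply: eq_bigr => i _; have Hi := ltn_ord i.
rewrite pt_x // pt_y // pt_z // pgetE /phi /= val_tau /tcode.
have := H2 i Hi; rewrite /bsum; have := H1 i; have := H1 (n + i)%N; have := H1 (2 * n + i)%N.
case: (get c i) => [|[|?]]; case: (get c (n + i)) => [|[|?]];
  case: (get c (2 * n + i)) => [|[|?]] //= *;
  rewrite ?expr0 ?expr1 ?mul1r ?mulr1 //; lia.
Qed.

Lemma tau_inj (c c' : mon k) : std c -> std c' ->
  (forall i : 'I_n, tau c i = tau c' i) -> c = c'.
Proof.
move=> [H1 H2 _] [H1' H2' _] E; apply: mon_ext => t Ht.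
have key : forall i, (i < n)%N ->
   [/\ get c i = get c' i, get c (n + i) = get c' (n + i) & get c (2 * n + i) = get c' (2 * n + i)].
  move=> i Hi; have := congr1 (@nat_of_ord 4) (E (Ordinal Hi)); rewrite !val_tau /tcode /=.
  have := H2 i Hi; have := H2' i Hi; rewrite /bsum.
  have := H1 i; have := H1 (n + i)%N; have := H1 (2 * n + i)%N.
  have := H1' i; have := H1' (n + i)%N; have := H1' (2 * n + i)%N.
  case: (get c i) => [|[|?]]; case: (get c (n + i)) => [|[|?]];
  case: (get c (2 * n + i)) => [|[|?]] //=;
  case: (get c' i) => [|[|?]]; case: (get c' (n + i)) => [|[|?]];
  case: (get c' (2 * n + i)) => [|[|?]] //= *; lia.
have [lt1|ge1] := ltnP t n; first by case: (key t lt1).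
have [lt2|ge2] := ltnP t (2 * n).
  have Hi : (t - n < n)%N by lia.
  by case: (key _ Hi) => _ + _; have -> : (n + (t - n) = t)%N by lia.
have Hi : (t - 2 * n < n)%N by lia.
by case: (key _ Hi) => _ _; have -> : (2 * n + (t - 2 * n) = t)%N by lia.
Qed.

Lemma C2 (h : mp k) (a0 : mon k) : stdp h ->
  (forall p : {ffun 'I_n -> 'I_4}, (exists i, val (p i) = 0%N) -> ev (pt_of p) h = 0) ->
  std a0 -> coefm h a0 = 0.
Proof.
move=> sh Hev sa0.
have [s [us Hs Eh]] := expand h.
have sts : forall c, c \in s -> std c by move=> c; rewrite Hs => /sh.
pose W (p : {ffun 'I_n -> 'I_4}) := \prod_(i < n) psi (tau a0 i) (p i).
have Z : \sum_(p : {ffun 'I_n -> 'I_4}) W p * ev (pt_of p) h = 0.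
  apply: big1 => p _; have [_ _ [i0 Hi0 B0]] := sa0.
  case: (eqVneq (val (p (Ordinal Hi0))) 0%N) => [pz|pnz].
    by rewrite Hev ?mulr0 //; exists (Ordinal Hi0).
  rewrite /W (bigD1 (Ordinal Hi0)) //= /psi.
  have -> : val (tau a0 i0) = 0%N.
    by rewrite /= val_tau /tcode; move: B0; rewrite /bsum; repeat case: ifP; lia.
  by rewrite (negbTE pnz) !mul0r.
have : \sum_(p : {ffun 'I_n -> 'I_4}) W p * ev (pt_of p) h = (a0 \in s)%:R.
  rewrite -(@sum_eq_uniq _ _ s a0 us).
  rewrite Eh.
  under eq_bigr do rewrite ev_sum big_distrr /=.
  rewrite exchange_big /=; apply: eq_big_seq => c cs.
  rewrite /W; under eq_bigr do rewrite (ev_std _ (sts _ cs)) -big_split /=.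
  rewrite -(bigA_distr_bigA (fun (i : 'I_n) (q : 'I_4) => psi (tau a0 i) q * phi (tau c i) q)) /=.
  under eq_bigr do rewrite orth.
  case: (eqVneq c a0) => [->|ne].
    by apply: big1 => i _; rewrite eqxx.
  case: (classic (exists i : 'I_n, tau a0 i != tau c i)) => [[i0 Hi0]|Hno].
    by rewrite (bigD1 i0) //= (negbTE Hi0) mul0r.
  exfalso; case/eqP: ne; apply: tau_inj; [exact: sts|exact: sa0|].
  move=> i; apply/eqP; apply/negP => /negP Hi; apply: Hno; exists i.
  by rewrite eq_sym.
rewrite Z => /esym; case: (boolP (a0 \in s)) => [_|]; first by move=> /eqP; rewrite oner_eq0.
by rewrite Hs negbK => /eqP.
Qed.
End N.

Theorem lemma2 (n : nat) (hn : (1 < n)%N) (le : mon (3 * n) -> mon (3 * n) -> Prop) :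
  admissible le -> total_degree le ->
  reduced_groebner_basis le (ideal_gen (@Gn n)) (@Gn n).
Proof.
move=> adm td; have adm' := adm; case: adm' => [refl [anti [trans [tot _]]]].
have F10 : (1 : 'F_2) != 0 by [].
split.
- split; first by move=> g Gg; apply: ideal_gen_in.
  move=> f If nf.
  have [s [us Hs Ef]] := expand f.
  have sne : s != [::].
    by apply/eqP => s0; move: nf; rewrite Ef s0 big_nil eqxx.
  have [a ain Hmax] := seq_max refl trans tot sne.
  have lmf : is_lm le f a.
    by split; [rewrite -Hs|move=> b; rewrite -Hs; apply: Hmax].
  case: (classic (std a)) => [sa|nsa]; last first.
    have [d [Hd Hdvd]] := nonstd_div nsa.
    exists (gpoly d), a, (glead d); split => //; first exact: gd_Gn.
    by case: (is_lm_gpoly Hd hn adm td).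
  exfalso.
  have degle : forall b, le b a -> (mdeg b <= mdeg a)%N.
    move=> b lba; case: (leqP (mdeg b) (mdeg a)) => // lt.
    by case: (td _ _ lt) => lab nab; case: nab; apply: anti.
  have build : forall s' : seq (mon (3 * n)), (forall b, b \in s' -> le b a) ->
    exists h, [/\ stdp h, ideal_gen (@Gn n) (\sum_(b <- s') Mo b - h) &
       coefm h a = \sum_(b <- s') (b == a)%:R].
    elim=> [|b s' IH] Hs'.
      exists 0; split; first by move=> c; rewrite coefm0 eqxx.
        by rewrite big_nil subrr; apply: ideal_gen0.
      by rewrite coefm0 big_nil.
    have [h [sh ih ch]] : exists h, [/\ stdp h, ideal_gen (@Gn n) (\sum_(b <- s') Mo b - h) &
       coefm h a = \sum_(b <- s') (b == a)%:R].
      by apply: IH => c cs; apply: Hs'; rewrite inE cs orbT.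
    have lba : le b a by apply: Hs'; rewrite mem_head.
    have [r [sr ir dr er nr]] := @reduce_mon n hn (mdeg b).+1 b (ltnSn _).
    exists (r + h); split.
    - by move=> c /coefmD_ne0 [/sr|/sh].
    - rewrite big_cons.
      have -> : Mo b + \sum_(b0 <- s') Mo b0 - (r + h) =
        (Mo b - r) + (\sum_(b0 <- s') Mo b0 - h).
        by rewrite opprD !addrA; congr (_ + _); rewrite -!addrA; congr (_ + _); rewrite addrC.
      exact: ideal_genD.
    - rewrite coefmD ch big_cons; congr (_ + _).
      case: (classic (std b)) => [sb|nsb].
        by rewrite (er sb) coefmMo.
      have nba : b != a by apply/eqP => E; apply: nsb; rewrite E.
      rewrite (negbTE nba); apply/eqP; apply/negP => /negP /(nr nsb).
      by have := degle _ lba; lia.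
  have [h [sh ih ch]] := build s (fun b bs => Hmax b bs).
  rewrite sum_eq_uniq // ain in ch; rewrite -Ef in ih.
  have Ih : ideal_gen (@Gn n) h.
    have -> : h = f - (f - h) by rewrite opprB addrC subrK.
    exact: ideal_genB.
  suff : coefm h a = 0 by rewrite ch => /eqP; rewrite oner_eq0.
  apply: (C2 sh _ sa) => p [i0 Hi0]; apply: (ideal_gen_ev _ Ih) => g /Gn_gd [d [Hd ->]].
  exact: (ev_gpoly_0 Hd Hi0).
- move=> g /Gn_gd [d [Hd ->]].
  have [lm lmu] := is_lm_gpoly Hd hn adm td.
  have c1 : coefm (gpoly d) (glead d) = 1 by rewrite coefm_gpoly // mem_head.
  split; first by apply/eqP => g0; move: c1; rewrite g0 coefm0 => /eqP; rewrite eq_sym oner_eq0.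
  by move=> a /lmu ->.
- move=> g g' /Gn_gd [d [Hd ->]] /Gn_gd [d' [Hd' ->]] ne b c lmb cc.
  have [_ lmu] := is_lm_gpoly Hd' hn adm td.
  rewrite (lmu _ lmb); apply: (reduced3 Hd Hd' hn ne).
  by move: cc; rewrite coefm_gpoly //; case: (c \in gmons d).
Qed.
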